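(* Let $T_{\mathfrak{sl}_3} \in \mathfrak{sl}_3^* \otimes \mathfrak{sl}_3^* \otimes \mathfrak{sl}_3$ be the structure tensor of the complex Lie algebra $\mathfrak{sl}_3$. Then its tensor rank satisfies $\mathbf{R}(T_{\mathfrak{sl}_3}) \leq 20$.
   Context: $\mathfrak{sl}_n$ denotes the Lie algebra of traceless $n\times n$ complex matrices with bracket $[x,y]=xy-yx$. Its structure tensor $T_{\mathfrak{sl}_n}\in \mathfrak{sl}_n^*\otimes\mathfrak{sl}_n^*\otimes\mathfrak{sl}_n$ is the tensor corresponding to the bilinear map $(x,y)\mapsto [x,y]$; in a basis $\{a_i\}$ with dual basis $\{\alpha^i\}$ and $[a_i,a_j]=\sum_k A_{ij}^k a_k$, it is $\sum_{i,j,k} A_{ij}^k\,\alpha^i\otimes\alpha^j\otimes a_k$. For a tensor $T\in A\otimes B\otimes C$ over $\mathbb{C}$, the rank $\mathbf{R}(T)$ is the minimal $r$ such that $T=\sum_{i=1}^r a_i\otimes b_i\otimes c_i$ with $a_i\in A$, $b_i\in B$, $c_i\in C$. *)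

(* Defs.v *)
From HB Require Import structures.
From mathcomp Require Import all_boot all_order all_algebra.
From mathcomp Require Import reals.
From mathcomp.real_closed Require Import complex.
Set Implicit Arguments. Unset Strict Implicit. Unset Printing Implicit Defensive.
Import GRing.Theory Num.Theory.
Local Open Scope ring_scope.

Definition sl (F : fieldType) (n : nat) : pred 'M[F]_n := fun x => \tr x == 0.
Arguments sl : clear implicits.

Definition lie_bracket (F : fieldType) (n : nat) (x y : 'M[F]_n) : 'M[F]_n :=
  x *m y - y *m x.

(* The structure tensor T_{sl_n} in sl_n^* (x) sl_n^* (x) sl_n has rank <= r:
   there are a_1..a_s, b_1..b_s in sl_n^* and c_1..c_s in sl_n, s <= r, with
   T = sum_i a_i (x) b_i (x) c_i, i.e. (identifying sl_n^* (x) sl_n^* (x) sl_n with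
   bilinear maps sl_n x sl_n -> sl_n) [x,y] = sum_i a_i(x) b_i(y) c_i for all
   x, y in sl_n.  Linear functionals on sl_n are represented as (restrictions of)
   linear functionals on 'M_n; every functional on sl_n arises this way. *)
Definition sl_struct_tensor_rank_le (F : fieldType) (n r : nat) : Prop :=
  exists s : nat, (s <= r)%N /\
  exists (a b : 'I_s -> {linear 'M[F]_n -> F^o}) (c : 'I_s -> 'M[F]_n),
    (forall i, c i \in sl F n) /\
    (forall x y : 'M[F]_n, x \in sl F n -> y \in sl F n ->
       lie_bracket x y = \sum_(i < s) (a i x * b i y) *: c i).

(* Main.v *)
Require Import Defs.
From HB Require Import structures.
From mathcomp Require Import all_boot all_order all_algebra.
From mathcomp Require Import reals.
From mathcomp.real_closed Require Import complex.

Set Implicit Arguments. Unset Strict Implicit. Unset Printing Implicit Defensive.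
Import GRing.Theory.
From mathcomp Require Import ring.
Local Open Scope ring_scope.

Definition i0 : 'I_3 := @Ordinal 3 0 isT.
Definition i1 : 'I_3 := @Ordinal 3 1 isT.
Definition i2 : 'I_3 := @Ordinal 3 2 isT.

Lemma ord3P (P : 'I_3 -> Prop) : P i0 -> P i1 -> P i2 -> forall i, P i.
Proof.
move=> H0 H1 H2 [[|[|[|k]]] Hk] //.
- by have -> : Ordinal Hk = i0 by apply: val_inj.
- by have -> : Ordinal Hk = i1 by apply: val_inj.
- by have -> : Ordinal Hk = i2 by apply: val_inj.
Qed.

Lemma sum3 (V : nmodType) (f : 'I_3 -> V) : \sum_(k < 3) f k = f i0 + f i1 + f i2.
Proof.
rewrite !big_ord_recl big_ord0 addr0 addrA.
by congr (f _ + f _ + f _); apply: val_inj.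
Qed.

Definition lf (F : fieldType) (v : seq F) (x : 'M[F]_3) : F^o :=
  nth 0 v 0 * x i0 i1 + nth 0 v 1 * x i0 i2 + nth 0 v 2 * x i1 i0 +
  nth 0 v 3 * x i1 i2 + nth 0 v 4 * x i2 i0 + nth 0 v 5 * x i2 i1 +
  nth 0 v 6 * x i0 i0 - nth 0 v 7 * x i2 i2.

Lemma lf_is_linear (F : fieldType) (v : seq F) : linear (lf v).
Proof. by move=> k x y; rewrite /lf !mxE /GRing.scale /=; ring. Qed.

HB.instance Definition _ (F : fieldType) (v : seq F) :=
  GRing.isLinear.Build F 'M[F]_3 F^o *:%R (lf v) (lf_is_linear v).

Definition cm (F : fieldType) (v : seq F) : 'M[F]_3 :=
  \matrix_(i, j)
    (if (val i == 0%N) && (val j == 1%N) then nth 0 v 0 else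
     if (val i == 0%N) && (val j == 2%N) then nth 0 v 1 else
     if (val i == 1%N) && (val j == 0%N) then nth 0 v 2 else
     if (val i == 1%N) && (val j == 2%N) then nth 0 v 3 else
     if (val i == 2%N) && (val j == 0%N) then nth 0 v 4 else
     if (val i == 2%N) && (val j == 1%N) then nth 0 v 5 else
     if (val i == 0%N) && (val j == 0%N) then nth 0 v 6 else
     if (val i == 1%N) && (val j == 1%N) then nth 0 v 7 - nth 0 v 6 else
     - nth 0 v 7).

Lemma cm_sl (F : fieldType) (v : seq F) : cm v \in sl F 3.
Proof.
rewrite /sl unfold_in /mxtrace sum3 !mxE /=.
by apply/eqP; ring.
Qed.

Definition As (F : fieldType) : seq (seq F) :=
  [:: [:: 0; 0; 1; 0; 0; 0; 0; 0];
  [:: 1; 0; (-1); 0; 0; 0; 0; 0];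
  [:: 1; 0; 0; 0; 0; 0; 0; 0];
  [:: (-2); (-1); 3; (-1); 0; 0; 2; (-1)];
  [:: (-1); 1; 2; (-1); 0; 0; 2; (-1)];
  [:: (-1); 1; (-1); (-1); 1; 1; 0; 0];
  [:: 0; 1; 0; 1; 0; 0; 0; 0];
  [:: 0; 0; 1; 0; (-1); 0; 0; 0];
  [:: 1; 0; 0; 0; 0; (-1); 0; 0];
  [:: 1; 0; 1; 0; (-1); (-1); 0; 0];
  [:: 0; 0; 0; 0; 0; 1; 0; 0];
  [:: 0; 0; (-1); (-1); 1; 1; 1; (-2)];
  [:: 0; 0; 1; 0; (-1); 0; (-1); 2];
  [:: 0; 0; 1; 0; (-1); (-1); (-1); 2];
  [:: 0; 0; 0; 1; 0; 0; 0; 0];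
  [:: 0; 0; 0; 0; (-1); 0; 0; 0];
  [:: 1; 2; 0; 0; (-2); (-1); 1; 1];
  [:: 1; 2; 0; 0; (-3); (-1); 1; 1];
  [:: 0; 1; 0; 0; 0; 0; 0; 0];
  [:: 1; 1; 0; 0; (-3); (-1); 1; 1]].
Definition Bs (F : fieldType) : seq (seq F) :=
  [:: [:: 1; (-1); (-2); 1; 0; 0; (-2); 1];
  [:: 2; (-1); (-2); 1; 0; 0; (-2); 1];
  [:: 2; (-1); (-3); 1; 0; 0; (-2); 1];
  [:: 1; 0; 0; 0; 0; 0; 0; 0];
  [:: 0; 0; 1; 0; 0; 0; 0; 0];
  [:: 0; 0; 1; 0; (-1); 0; 0; 0];
  [:: 1; 0; 0; 0; 0; 1; 0; 0];
  [:: 1; (-1); 1; 1; (-1); (-1); 0; 0];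
  [:: 0; 1; 0; (-1); 0; 0; 0; 0];
  [:: 0; (-1); 1; 1; (-1); 0; 0; 0];
  [:: 0; 0; 0; (-1); 0; 0; 0; 0];
  [:: 0; 0; 1; 0; (-1); 0; (-1); 2];
  [:: 0; 0; 1; 1; (-1); (-1); (-1); 2];
  [:: 0; 0; 1; 1; (-1); 0; (-1); 2];
  [:: 0; 0; 0; 0; 0; 1; 0; 0];
  [:: (-1); (-1); 0; 0; 3; 1; (-1); (-1)];
  [:: 0; 1; 0; 0; 0; 0; 0; 0];
  [:: 0; (-1); 0; 0; (-1); 0; 0; 0];
  [:: 1; (-2); 0; 0; 2; 1; (-1); (-1)];
  [:: 0; 0; 0; 0; 1; 0; 0; 0]].
Definition Cs (F : fieldType) : seq (seq F) :=
  [:: [:: 3; 0; (-2); 0; 1; (-1); 1; 0];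
  [:: 3; 0; (-1); 0; 1; (-1); 1; 0];
  [:: (-2); 0; 1; 0; (-1); 1; (-1); 0];
  [:: 1; 0; 0; 0; 0; 0; 0; 0];
  [:: 0; 0; (-1); 0; 0; 0; 0; 0];
  [:: 0; 0; 1; (-1); 0; 0; 0; 0];
  [:: 1; (-1); 0; 0; 0; 0; 0; 0];
  [:: 0; 0; 0; 0; 1; (-1); 0; 0];
  [:: 1; (-1); 1; (-1); (-1); 1; 0; 0];
  [:: 0; 0; 1; (-1); (-1); 1; 0; 0];
  [:: 1; (-1); 0; (-1); 0; 1; 0; 1];
  [:: 0; 0; 0; 1; 0; 0; 0; 0];
  [:: 0; 0; 0; 0; 0; 1; 0; 0];
  [:: 0; 0; 0; 1; 0; (-1); 0; 0];
  [:: (-1); 1; 0; 0; 0; 0; 0; 1];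
  [:: 0; 0; 0; 0; 1; 0; 0; 0];
  [:: 0; 3; (-1); 1; (-1); 0; (-1); (-1)];
  [:: 0; 2; (-1); 1; (-1); 0; (-1); (-1)];
  [:: 0; 1; 0; 0; 0; 0; 0; 0];
  [:: 0; 2; (-1); 1; (-2); 0; (-1); (-1)]].

Definition la (F : fieldType) (i : 'I_20) : {linear 'M[F]_3 -> F^o} := lf (nth [::] (As F) i).
Definition lb (F : fieldType) (i : 'I_20) : {linear 'M[F]_3 -> F^o} := lf (nth [::] (Bs F) i).
Definition lc (F : fieldType) (i : 'I_20) : 'M[F]_3 := cm (nth [::] (Cs F) i).

Arguments la {F} i.
Arguments lb {F} i.
Arguments lc {F} i.

Lemma main_plain (F : fieldType) (x y : 'M[F]_3) :
  x \in sl F 3 -> y \in sl F 3 ->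
  lie_bracket x y = \sum_(i < 20) (lf (nth [::] (As F) i) x * lf (nth [::] (Bs F) i) y) *: cm (nth [::] (Cs F) i).
Proof.
rewrite /sl !unfold_in /mxtrace !sum3 => /eqP hx /eqP hy.
have ex : x i2 i2 = - x i0 i0 - x i1 i1 by apply/eqP; rewrite -subr_eq0 -hx; apply/eqP; ring.
have ey : y i2 i2 = - y i0 i0 - y i1 i1 by apply/eqP; rewrite -subr_eq0 -hy; apply/eqP; ring.
rewrite -(big_mkord xpredT (fun k => (lf (nth [::] (As F) k) x * lf (nth [::] (Bs F) k) y) *: cm (nth [::] (Cs F) k))).
rewrite !big_nat_recl // big_geq //.
rewrite /As /Bs /Cs /=.
apply/matrixP; apply: ord3P; apply: ord3P;
  rewrite /lie_bracket !mxE !sum3 /lf /= ?mxE /= ex ey; ring.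
Qed.

Lemma main_identity (F : fieldType) (x y : 'M[F]_3) :
  x \in sl F 3 -> y \in sl F 3 ->
  lie_bracket x y = \sum_(i < 20) (la i x * lb i y) *: lc i.
Proof. by move=> hx hy; rewrite (main_plain hx hy). Qed.

Theorem theorem2 (R : realType) : sl_struct_tensor_rank_le (R[i]) 3 20.
Proof.
exists 20%N; split => //.
exists (@la R[i]), (@lb R[i]), (@lc R[i]); split.
- by move=> i; apply: cm_sl.
- by move=> x y hx hy; apply: main_identity.
Qed.
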